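(* Let $n\ge1$ and let $d,m\ge0$ be integers with $m\ne(n-1)(d+1)$. Then $$\bigg(\sum_{j=1}^n\frac{\alpha_j^{m}}{\prod_{k\ne j}(\alpha_j-\alpha_k)^{d+1}}\bigg)\bigg|_{\alpha=0}=0.$$
   Context: $\alpha_1,\dots,\alpha_n$ are variables; $|_{\alpha=0}$ means setting all $\alpha_k=0$ in the rational function. *)

(* Defs.v *)
From HB Require Import structures.
From mathcomp Require Import all_boot all_order all_algebra.
From mathcomp Require Import mpoly.
Set Implicit Arguments. Unset Strict Implicit. Unset Printing Implicit Defensive.
Import Order.TTheory GRing.Theory.
Local Open Scope ring_scope.

Notation ratfun K n := {fraction {mpoly K[n]}}.
Notation "x %:F" := (@FracField.tofrac _ x) : ring_scope.

Definition alpha (K : fieldType) (n : nat) (j : 'I_n) : ratfun K n :=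
  ('X_j : {mpoly K[n]})%:F.

Definition Ssum (K : fieldType) (n d m : nat) : ratfun K n :=
  \sum_(j < n) (alpha K j ^+ m /
     \prod_(k < n | k != j) (alpha K j - alpha K k) ^+ d.+1).

(* "F|_{alpha=0} = v": F can be written as P/Q with P, Q polynomials and
   Q(0) <> 0, and v = P(0)/Q(0) (this value is independent of the choice
   of P, Q).  Setting alpha = 0 is only meaningful for such F. *)
Definition eval_at0_is (K : fieldType) (n : nat) (F : ratfun K n) (v : K) :=
  exists P Q : {mpoly K[n]},
    [/\ Q.@[fun _ => 0] != 0, F = P%:F / Q%:F & v = P.@[fun _ => 0] / Q.@[fun _ => 0]].

(* Main.v *)
Require Import Defs.
From HB Require Import structures.
From mathcomp Require Import all_boot all_order all_algebra.
From mathcomp Require Import mpoly.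
From mathcomp Require Import ring.
Import GRing.Theory.
Local Open Scope ring_scope.
Section S.
Context (K : fieldType) (n : nat).
Definition fC : {rmorphism K -> {poly {mpoly K[n]}}} := (@polyC _ \o @mpolyC n K)%FUN.
Definition phi (p : {mpoly K[n]}) : {poly {mpoly K[n]}} :=
  mmap fC (fun i => ('X_i)%:P * 'X) p.
Lemma phiM p q : phi (p * q) = phi p * phi q.
Proof. by rewrite /phi rmorphM. Qed.
Lemma phiX i : phi 'X_i = ('X_i)%:P * 'X.
Proof. by rewrite /phi mmapX mmap1U. Qed.
Lemma phi0 p : (phi p).[0] = (p.@[fun _ => 0])%:MP.
Proof.
rewrite /phi /mmap mevalE horner_sum rmorph_sum; apply: eq_bigr => m _.
rewrite hornerM /= hornerC rmorphM /=; congr (_ * _).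
rewrite /mmap1 horner_prod rmorph_prod; apply: eq_bigr => i _.
by rewrite horner_exp hornerMX mulr0 rmorphXn /= mpolyC0.
Qed.
Lemma prodX (P : pred 'I_n) (a : 'I_n -> {mpoly K[n]}) e :
  \prod_(k | P k) ((a k)%:P * 'X) ^+ e = (\prod_(k | P k) a k ^+ e)%:P * 'X^(#|P| * e).
Proof.
rewrite (eq_bigr (fun k => (a k ^+ e)%:P * 'X^e)); last by move=> k _; rewrite exprMn rmorphXn.
by rewrite big_split /= rmorph_prod prodr_const -exprM mulnC.
Qed.

Context (d : nat).
Definition e := ((n - 1) * d.+1)%N.
Definition b (j : 'I_n) : {mpoly K[n]} := \prod_(k | k != j) ('X_j - 'X_k) ^+ d.+1.
Definition W := \prod_(j < n) b j.
Definition N (m : nat) := \sum_(j < n) 'X_j ^+ m * \prod_(i | i != j) b i.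

Lemma XB_neq0 (j k : 'I_n) : k != j -> ('X_j - 'X_k : {mpoly K[n]}) != 0.
Proof.
move=> hkj; apply/eqP => h; have := congr1 (mcoeff U_(j)) h.
rewrite mcoeffB !mcoeffXU eqxx (negbTE hkj) mcoeff0 subr0 => /eqP.
by rewrite oner_eq0.
Qed.

Lemma b_neq0 j : b j != 0.
Proof. by apply/prodf_neq0 => k hk; rewrite expf_neq0 // XB_neq0. Qed.

Lemma W_neq0 : W != 0.
Proof. by apply/prodf_neq0 => j _; exact: b_neq0. Qed.

Lemma phi_b j : phi (b j) = (b j)%:P * 'X^e.
Proof.
rewrite /b /phi rmorph_prod.
rewrite (eq_bigr (fun k => (('X_j - 'X_k)%:P * 'X) ^+ d.+1)); last first.
  by move=> k _; rewrite rmorphXn rmorphB /= -!/(phi _) !phiX -mulrBl -rmorphB.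
rewrite prodX; congr (_ * 'X^(_ * _)).
by rewrite cardC1 card_ord subn1.
Qed.

Lemma phi_W : phi W = W%:P * 'X^(n * e).
Proof.
rewrite /W {1}/phi rmorph_prod.
rewrite (eq_bigr (fun j => (b j)%:P * 'X^e)); last by move=> j _; rewrite -phi_b.
by rewrite big_split /= rmorph_prod prodr_const card_ord -exprM mulnC.
Qed.

Lemma phi_prod (P : pred 'I_n) (F : 'I_n -> {mpoly K[n]}) :
  phi (\prod_(i | P i) F i) = \prod_(i | P i) phi (F i).
Proof. by rewrite /phi rmorph_prod. Qed.
Lemma phi_sum (F : 'I_n -> {mpoly K[n]}) :
  phi (\sum_(i < n) F i) = \sum_(i < n) phi (F i).
Proof. by rewrite /phi rmorph_sum. Qed.
Lemma phiXn i k : phi ('X_i ^+ k) = (('X_i)%:P * 'X) ^+ k.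
Proof. by rewrite /phi rmorphXn /= -/(phi _) phiX. Qed.

Lemma phi_N m : phi (N m) = (N m)%:P * 'X^(m + (n - 1) * e).
Proof.
rewrite /N phi_sum rmorph_sum /= mulr_suml; apply: eq_bigr => j _.
rewrite phiM phiXn phi_prod.
rewrite (eq_bigr (fun i => (b i)%:P * 'X^e)); last by move=> i _; rewrite -phi_b.
rewrite big_split /= prodr_const cardC1 card_ord subn1 -exprM.
rewrite exprMn polyCM rmorph_prod /= polyC_exp exprD mulnC.
by rewrite -!mulrA; congr (_ * _); rewrite mulrCA !mulrA.
Qed.

Lemma Ssum_eq m : Ssum K n d m = (N m)%:F / W%:F.
Proof.
rewrite /Ssum /N rmorph_sum /= mulr_suml; apply: eq_bigr => j _.
rewrite /alpha -rmorphXn.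
have -> : \prod_(k | k != j) ((('X_j)%:F : ratfun K n) - ('X_k)%:F) ^+ d.+1 = (b j)%:F.
  by rewrite /b rmorph_prod; apply: eq_bigr => k _; rewrite rmorphXn rmorphB.
rewrite /W [\prod_(j0 < n) b j0](bigD1 j) //= !tofracM invfM mulrACA divff ?mulr1 //.
rewrite tofrac_eq0; apply/prodf_neq0 => i _; exact: b_neq0.
Qed.
End S.

Theorem lemma3p2 (K : fieldType) (hK : [pchar K] =i pred0) (n d m : nat) :
  (1 <= n)%N -> m <> ((n - 1) * (d + 1))%N ->
  forall v : K, eval_at0_is (Ssum K n d m) v -> v = 0.
Proof.
move=> hn hm v [P [Q [hQ0 hF ->]]].
suff -> : P.@[fun _ => 0] = 0 by rewrite mul0r.
have hQ : Q != 0 by apply: contraNneq hQ0 => ->; rewrite meval0.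
have hW := @W_neq0 K n d.
have eqF : P * W K n d = N K n d m * Q.
  apply/eqP; rewrite -tofrac_eq !tofracM -eqr_div ?tofrac_eq0 //.
  by rewrite -Ssum_eq hF.
have := congr1 (@phi K n) eqF; rewrite !phiM phi_W phi_N.
have hX : forall k, ('X^k : {poly {mpoly K[n]}}) != 0.
  by move=> k; rewrite expf_neq0 // polyX_eq0.
rewrite addn1 in hm.
have hE : e n d = ((n - 1) * d.+1)%N by [].
rewrite -hE in hm; move: (e n d) hm => E hm.
have hnE : (n * E = E + (n - 1) * E)%N by rewrite -mulSn subn1 prednK.
move: ((n - 1) * E)%N hnE => F ->.
case: (ltngtP m E) => hmE; last by exfalso; exact: hm.
-
  have -> : (E + F = (m + F) + (E - m))%N by rewrite addnAC subnKC // ltnW.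
  move=> h.
  have h2 : (phi K n P * (W K n d)%:P * 'X^(E - m)) * 'X^(m + F) =
            ((N K n d m)%:P * phi K n Q) * 'X^(m + F).
    apply: etrans (etrans _ h) _; rewrite ?exprD; ring.
  move: h2 => /(mulIf (hX _)) /(congr1 (fun p => p.[0])).
  rewrite !hornerM hornerXn expr0n subn_eq0 leqNgt hmE /= mulr0 !hornerC !phi0.
  move/esym/eqP; rewrite mulf_eq0 mpolyC_eq0 (negbTE hQ0) orbF => /eqP hN.
  move: eqF; rewrite hN mul0r => /eqP; rewrite mulf_eq0 (negbTE hW) orbF => /eqP ->.
  by rewrite meval0.
-
  have -> : (m + F = (E + F) + (m - E))%N by rewrite addnAC subnKC // ltnW.
  move=> h.
  have h2 : (phi K n P * (W K n d)%:P) * 'X^(E + F) =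
            ((N K n d m)%:P * 'X^(m - E) * phi K n Q) * 'X^(E + F).
    apply: etrans (etrans _ h) _; rewrite ?exprD; ring.
  move: h2 => /(mulIf (hX _)) /(congr1 (fun p => p.[0])).
  rewrite !hornerM hornerXn expr0n subn_eq0 leqNgt hmE /= mulr0 mul0r !hornerC !phi0.
  move/eqP; rewrite mulf_eq0 (negbTE hW) orbF mpolyC_eq0 => /eqP //.
Qed.
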